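(* Let $\mathbf G$ be a minimal counterexample such that $d(w)\ge 2$ for every $w\in V_2$. Then $\mathcal D+\sum_{v\in V_1}d(v)\ge 2n-12$.
   Context: A graph triple $\mathbf G=(G_1,G_2,G_3)$ of order $n$ consists of two disjoint $n$-vertex graphs $G_1=(V_1,E_1)$, $G_2=(V_2,E_2)$ and a bipartite graph $G_3=(V_1\cup V_2,E_3)$ with parts $V_1,V_2$. $\mathbf G$ packs if there is a bijection $f:V_1\to V_2$ with $vf(v)\notin E_3$ for all $v\in V_1$ and such that $uv\in E_1$ implies $f(u)f(v)\notin E_2$. For $v\in V_i$ ($i=1,2$), $d_i(v)$ is its degree in $G_i$ (its white degree), $d_3(v)$ its degree in $G_3$, and $d(v)=d_i(v)+d_3(v)$. Let $e_i=|E_i|$, $\Delta_i=\max_v d_i(v)$ for $i=1,2,3$, $\Delta_{3|i}=\max_{v\in V_i}d_3(v)$, $\mathcal D=\max\{\Delta_1+\max\{\Delta_{3|2}-4,0\},\ \Delta_2+\max\{\Delta_{3|1}-4,0\}\}$, and $F(\mathbf G)=e_1+e_2+e_3+\mathcal D$. Let $C=11\cdot195^2+4$. A minimal counterexample is a graph triple $\mathbf G$ of the smallest order $n$ among all graph triples satisfying $\Delta_1,\Delta_2\le n-2$, $\Delta_3\le n-1$ and $F(\mathbf G)\le 3n-C$ that do not pack. *)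

(* Defs.v *)
From mathcomp Require Import all_boot.
Set Implicit Arguments. Unset Strict Implicit. Unset Printing Implicit Defensive.

(* A graph triple of order n: V1 = V2 = 'I_n (two disjoint copies),
   G1 : rel on V1, G2 : rel on V2 (simple graphs: irreflexive, symmetric),
   G3 : rel 'I_n 'I_n, where G3 v w means the edge v w with v in V1, w in V2. *)
Definition simple_graph (n : nat) (G : rel 'I_n) : Prop :=
  irreflexive G /\ symmetric G.

Definition graph_triple (n : nat) (G1 G2 G3 : rel 'I_n) : Prop :=
  simple_graph G1 /\ simple_graph G2.

Definition packs (n : nat) (G1 G2 G3 : rel 'I_n) : Prop :=
  exists f : 'I_n -> 'I_n, bijective f /\
    (forall v, ~~ G3 v (f v)) /\
    (forall u v, G1 u v -> ~~ G2 (f u) (f v)).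

Definition wdeg (n : nat) (G : rel 'I_n) (v : 'I_n) : nat := #|[set u | G v u]|.
Definition d3_1 (n : nat) (G3 : rel 'I_n) (v : 'I_n) : nat := #|[set w | G3 v w]|.
Definition d3_2 (n : nat) (G3 : rel 'I_n) (w : 'I_n) : nat := #|[set v | G3 v w]|.

Definition nedges (n : nat) (G : rel 'I_n) : nat :=
  #|[set p : 'I_n * 'I_n | (p.1 < p.2) && G p.1 p.2]|.
Definition nedges3 (n : nat) (G3 : rel 'I_n) : nat :=
  #|[set p : 'I_n * 'I_n | G3 p.1 p.2]|.

Definition maxdeg (n : nat) (d : 'I_n -> nat) : nat := \big[maxn/0]_(v < n) d v.
Definition Delta1 n (G1 : rel 'I_n) := maxdeg (wdeg G1).
Definition Delta2 n (G2 : rel 'I_n) := maxdeg (wdeg G2).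
Definition Delta31 n (G3 : rel 'I_n) := maxdeg (d3_1 G3).
Definition Delta32 n (G3 : rel 'I_n) := maxdeg (d3_2 G3).
Definition Delta3 n (G3 : rel 'I_n) := maxn (Delta31 G3) (Delta32 G3).

(* \mathcal D ; truncated nat subtraction x - 4 = max{x-4,0} *)
Definition calD n (G1 G2 G3 : rel 'I_n) : nat :=
  maxn (Delta1 G1 + (Delta32 G3 - 4)) (Delta2 G2 + (Delta31 G3 - 4)).

Definition Fval n (G1 G2 G3 : rel 'I_n) : nat :=
  nedges G1 + nedges G2 + nedges3 G3 + calD G1 G2 G3.

Definition constC : nat := 11 * 195 ^ 2 + 4.

(* the hypotheses Delta1,Delta2 <= n-2, Delta3 <= n-1, F <= 3n - C,
   written without subtraction (integer reading). *)
Definition admissible n (G1 G2 G3 : rel 'I_n) : Prop :=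
  graph_triple G1 G2 G3 /\
  Delta1 G1 + 2 <= n /\ Delta2 G2 + 2 <= n /\ Delta3 G3 + 1 <= n /\
  Fval G1 G2 G3 + constC <= 3 * n.

Definition minimal_counterexample n (G1 G2 G3 : rel 'I_n) : Prop :=
  admissible G1 G2 G3 /\ ~ packs G1 G2 G3 /\
  (forall m (H1 H2 H3 : rel 'I_m), m < n -> admissible H1 H2 H3 -> packs H1 H2 H3).

(* Main.v *)
Require Import Defs.
From mathcomp Require Import all_boot perm zify.
Set Implicit Arguments. Unset Strict Implicit. Unset Printing Implicit Defensive.

Lemma card_sum (T : finType) (Q : pred T) : #|[set x | Q x]| = \sum_x (Q x : nat).
Proof.
rewrite -sum1_card big_mkcond /=; apply: eq_bigr => i _; rewrite inE; by case: (Q i).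
Qed.

Lemma card_exists_le (T U : finType) (P : pred U) (R : U -> T -> bool) :
  #|[set z | [exists y, P y && R y z]]| <= \sum_(y | P y) #|[set z | R y z]|.
Proof.
rewrite (card_sum (fun z => [exists y, P y && R y z])).
rewrite (eq_bigr (fun y => \sum_z (R y z : nat))); last by move=> y _; rewrite (card_sum (fun z => R y z)).
rewrite exchange_big /=; apply: leq_sum => z _.
case: existsP => [[y /andP[Py Ryz]]|] //=.
rewrite (bigD1 y) //= Ryz; exact: leq_addr.
Qed.

Lemma lift_ltn n (h : 'I_n) (i j : 'I_n.-1) : (lift h i < lift h j) = (i < j).
Proof. by rewrite /= !ltnNge leq_bump2. Qed.

Lemma maxdeg_le n (d : 'I_n -> nat) k : (forall v, d v <= k) -> maxdeg d <= k.
Proof. move=> H; rewrite /maxdeg; apply/bigmax_leqP => i _; exact: H. Qed.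

Lemma le_maxdeg n (d : 'I_n -> nat) v : d v <= maxdeg d.
Proof. exact: leq_bigmax. Qed.

Lemma card_lift n (h : 'I_n.+1) (P : pred 'I_n.+1) :
  #|[set y : 'I_n | P (lift h y)]| + P h <= #|[set u | P u]|.
Proof.
have E : #|[set y : 'I_n | P (lift h y)]| = #|[set lift h y | y in [set y : 'I_n | P (lift h y)]]|.
  by rewrite card_imset //; exact: lift_inj.
rewrite E (cardsD1 h [set u | P u]) inE addnC leq_add2l.
apply: subset_leq_card; apply/subsetP => x /imsetP[y]; rewrite !inE => Py ->.
by rewrite Py andbT eq_sym neq_lift.
Qed.

Lemma disj_le (T : finType) (A B C : {set T}) :
  A \subset C -> B \subset C -> (forall x, x \in A -> x \notin B) -> #|A| + #|B| <= #|C|.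
Proof.
move=> AC BC D; rewrite -cardsUI.
have -> : A :&: B = set0.
  apply/setP => x; rewrite !inE; apply/negbTE; apply/negP => /andP[xa xb].
  by move: (D x xa); rewrite xb.
rewrite cards0 addn0; apply: subset_leq_card; by rewrite subUset AC BC.
Qed.

Lemma wdeg_edges n (G : rel 'I_n) x : irreflexive G -> symmetric G ->
  wdeg G x <= #|[set p : 'I_n * 'I_n | (p.1 < p.2) && G p.1 p.2 && ((p.1 == x) || (p.2 == x))]|.
Proof.
move=> irr sym.
pose phi := fun u : 'I_n => if x < u then (x, u) else (u, x).
have phi_inj : injective phi.
  move=> u u'; rewrite /phi.
  case: (ltnP x u) => hu; case: (ltnP x u') => hu' /pair_equal_spec [e1 e2]; try by [].
  - by subst; rewrite ltnn in hu.
  - by subst; rewrite ltnn in hu'.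
rewrite /wdeg -(card_imset _ phi_inj); apply: subset_leq_card.
apply/subsetP => p /imsetP[u]; rewrite inE => Gxu ->; rewrite inE /phi.
case: (ltnP x u) => hu /=; first by rewrite hu Gxu eqxx.
have nux : u != x by apply: contraTneq Gxu => ->; rewrite irr.
rewrite eqxx orbT andbT.
have -> : u < x by rewrite ltn_neqAle hu andbT.
by rewrite /= sym Gxu.
Qed.

Definition del1 n (G : rel 'I_n.+1) (v : 'I_n.+1) : rel 'I_n :=
  fun a b => G (lift v a) (lift v b).
Definition del3 n (G : rel 'I_n.+1) (v w : 'I_n.+1) : rel 'I_n :=
  fun a b => G (lift v a) (lift w b).

Lemma wdeg_del n (G : rel 'I_n.+1) v x :
  wdeg (del1 G v) x + G (lift v x) v <= wdeg G (lift v x).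
Proof. exact: (card_lift v (G (lift v x))). Qed.

Lemma wdeg_del_le n (G : rel 'I_n.+1) v x : wdeg (del1 G v) x <= wdeg G (lift v x).
Proof. exact: leq_trans (leq_addr _ _) (wdeg_del G v x). Qed.

Lemma d31_del n (G : rel 'I_n.+1) v w x : d3_1 (del3 G v w) x <= d3_1 G (lift v x).
Proof. exact: leq_trans (leq_addr _ _) (card_lift w (G (lift v x))). Qed.

Lemma d32_del n (G : rel 'I_n.+1) v w y : d3_2 (del3 G v w) y <= d3_2 G (lift w y).
Proof. exact: leq_trans (leq_addr _ _) (card_lift v (fun a => G a (lift w y))). Qed.

Lemma nedges_del n (G : rel 'I_n.+1) v : irreflexive G -> symmetric G ->
  nedges (del1 G v) + wdeg G v <= nedges G.
Proof.
move=> irr sym.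
pose phi := fun p : 'I_n * 'I_n => (lift v p.1, lift v p.2).
have phi_inj : injective phi.
  by move=> [a b] [c d]; rewrite /phi /= => /pair_equal_spec [/lift_inj -> /lift_inj ->].
rewrite /nedges -(card_imset _ phi_inj).
apply: (leq_trans (leq_add (leqnn _) (wdeg_edges v irr sym))).
apply: disj_le.
- apply/subsetP => p /imsetP[q]; rewrite inE => Hq ->; by rewrite inE /= lift_ltn.
- by apply/subsetP => p; rewrite !inE => /andP[].
- move=> p /imsetP[q] _ ->; rewrite inE /= negb_and; apply/orP; right.
  by rewrite negb_or !(eq_sym (lift v _)) !neq_lift.
Qed.

Lemma nedges3_del n (G : rel 'I_n.+1) v w : ~~ G v w ->
  nedges3 (del3 G v w) + d3_1 G v + d3_2 G w <= nedges3 G.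
Proof.
move=> nvw.
pose phi := fun p : 'I_n * 'I_n => (lift v p.1, lift w p.2).
have phi_inj : injective phi.
  by move=> [a b] [c d]; rewrite /phi /= => /pair_equal_spec [/lift_inj -> /lift_inj ->].
have e1 : d3_1 G v = #|[set (v, y) | y in [set y | G v y]]|.
  by rewrite card_imset // => a b /pair_equal_spec [].
have e2 : d3_2 G w = #|[set (x, w) | x in [set x | G x w]]|.
  by rewrite card_imset // => a b /pair_equal_spec [].
rewrite /nedges3 -(card_imset _ phi_inj) e1 e2 -addnA.
have H : #|[set (v, y) | y in [set y | G v y]]| + #|[set (x, w) | x in [set x | G x w]]|
   <= #|[set (v, y) | y in [set y | G v y]] :|: [set (x, w) | x in [set x | G x w]]|.
  apply: disj_le; first exact: subsetUl; first exact: subsetUr.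
  move=> p /imsetP[y]; rewrite inE => Gy -> /=; apply/imsetP => [[x]]; rewrite inE => Gx.
  by move/pair_equal_spec => [e e']; subst; rewrite Gy in nvw.
apply: (leq_trans (leq_add (leqnn _) H)).
apply: disj_le.
- by apply/subsetP => p /imsetP[q]; rewrite inE => ? ->; rewrite inE.
- by apply/subsetP => p /setUP[] /imsetP[y]; rewrite inE => ? ->; rewrite inE.
- move=> p /imsetP[q] _ ->; apply/negP => /setUP[] /imsetP[y] _ /pair_equal_spec [e e'].
  + by move: (neq_lift v q.1); rewrite e eqxx.
  + by move: (neq_lift w q.2); rewrite e' eqxx.
Qed.

Definition ppack n (G1 G2 G3 : rel 'I_n) v w (f : 'I_n -> 'I_n) :=
  bijective f /\ f v = w /\ (forall u, u != v -> ~~ G3 u (f u)) /\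
  (forall a b, a != v -> b != v -> G1 a b -> ~~ G2 (f a) (f b)).

Lemma ext_perm n (v w : 'I_n.+1) (g : 'I_n -> 'I_n) : bijective g ->
  exists f : 'I_n.+1 -> 'I_n.+1, [/\ bijective f, f v = w &
     forall x, f (lift v x) = lift w (g x)].
Proof.
case=> gi gK giK.
pose f := fun u => if unlift v u is Some x then lift w (g x) else w.
pose h := fun u => if unlift w u is Some y then lift v (gi y) else v.
exists f; split.
- exists h.
  + move=> u; rewrite /f /h; case: (unliftP v u) => [x ->|->].
    * by rewrite liftK gK.
    * by rewrite unlift_none.
  + move=> u; rewrite /f /h; case: (unliftP w u) => [y ->|->].
    * by rewrite liftK giK.
    * by rewrite unlift_none.
- by rewrite /f unlift_none.
- by move=> x; rewrite /f liftK.
Qed.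

Lemma Delta_mono n (d1 : 'I_n -> nat) (d2 : 'I_n.+1 -> nat) (l : 'I_n -> 'I_n.+1) :
  (forall x, d1 x <= d2 (l x)) -> maxdeg d1 <= maxdeg d2.
Proof. move=> H; apply: maxdeg_le => x; exact: leq_trans (H x) (le_maxdeg _ _). Qed.

Lemma reduce n (G1 G2 G3 : rel 'I_n.+1) v w :
  graph_triple G1 G2 G3 ->
  (forall m (H1 H2 H3 : rel 'I_m), m < n.+1 -> admissible H1 H2 H3 -> packs H1 H2 H3) ->
  Fval G1 G2 G3 + constC <= 3 * n.+1 ->
  (forall u, wdeg G1 u + 3 <= n.+1) ->
  (forall x, x != w -> wdeg G2 x + 3 <= n.+1 + G2 x w) ->
  (forall u, d3_1 G3 u + 2 <= n.+1) -> (forall y, d3_2 G3 y + 2 <= n.+1) ->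
  ~~ G3 v w -> 3 <= wdeg G1 v + d3_1 G3 v + (wdeg G2 w + d3_2 G3 w) ->
  exists f, ppack G1 G2 G3 v w f.
Proof.
move=> [[irr1 sym1] [irr2 sym2]] min HF HD1 HD2 HD31 HD32 nvw Hdrop.
have Hn : 10 <= n.
  have eC : 100 <= constC.
    rewrite /constC; apply: (leq_trans _ (leq_addr _ _)).
    by apply: (leq_trans _ (leq_pmull _ _)); rewrite ?expn_gt0.
  move: HF eC; lia.
pose H1 := del1 G1 v; pose H2 := del1 G2 w; pose H3 := del3 G3 v w.
have adm : admissible H1 H2 H3.
  have D1 : Delta1 H1 <= Delta1 G1 by apply: Delta_mono => x; exact: wdeg_del_le.
  have D2 : Delta2 H2 <= Delta2 G2 by apply: Delta_mono => x; exact: wdeg_del_le.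
  have D31 : Delta31 H3 <= Delta31 G3 by apply: Delta_mono => x; exact: d31_del.
  have D32 : Delta32 H3 <= Delta32 G3 by apply: Delta_mono => x; exact: d32_del.
  have E1 := nedges_del v irr1 sym1.
  have E2 := nedges_del w irr2 sym2.
  have E3 := nedges3_del nvw.
  rewrite /H1 /H2 /H3 in D1 D2 D31 D32 *.
  split; [|split; [|split; [|split]]].
  - split; split.
    + by move=> x; rewrite /H1 /del1 irr1.
    + by move=> x y; rewrite /H1 /del1 sym1.
    + by move=> x; rewrite /H2 /del1 irr2.
    + by move=> x y; rewrite /H2 /del1 sym2.
  - have : Delta1 (del1 G1 v) <= n - 2.
      apply: maxdeg_le => x; have := wdeg_del_le G1 v x; have := HD1 (lift v x); lia.
    lia.
  - have : Delta2 (del1 G2 w) <= n - 2.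
      apply: maxdeg_le => x; have := wdeg_del G2 w x; have := HD2 (lift w x).
      rewrite eq_sym neq_lift => /(_ isT); lia.
    lia.
  - have : Delta31 (del3 G3 v w) <= n - 1.
      apply: maxdeg_le => x; have := d31_del G3 v w x; have := HD31 (lift v x); lia.
    have : Delta32 (del3 G3 v w) <= n - 1.
      apply: maxdeg_le => x; have := d32_del G3 v w x; have := HD32 (lift w x); lia.
    rewrite /Delta3; lia.
  - move: HF; rewrite /Fval /calD; lia.
have [g [gbij [g3 g12]]] := min _ _ _ _ (ltnSn n) adm.
have [f [fbij fv fl]] := ext_perm v w gbij.
exists f; split; [done|split; [done|split]].
- move=> u; case: (unliftP v u) => [x ->|-> //]; last by rewrite eqxx.
  by rewrite fl; have := g3 x.
- move=> a b; case: (unliftP v a) => [x ->|->]; last by rewrite eqxx.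
  case: (unliftP v b) => [y ->|->]; last by rewrite eqxx.
  by move=> _ _ Gxy; rewrite !fl; apply: (g12 x y).
Qed.

Lemma tperm_cases (T : finType) (v z a : T) :
  (a = v /\ tperm v z a = z) \/ (a != v /\ a = z /\ tperm v z a = v) \/
  (a != v /\ a != z /\ tperm v z a = a).
Proof.
case: (eqVneq a v) => [->|av]; first by left; rewrite tpermL.
case: (eqVneq a z) => [->|az]; first by right; left; rewrite tpermR.
by right; right; rewrite tpermD // eq_sym.
Qed.

Lemma swap_packs n (G1 G2 G3 : rel 'I_n) v w f z :
  graph_triple G1 G2 G3 -> ppack G1 G2 G3 v w f ->
  ~~ G3 z w -> ~~ G3 v (f z) ->
  (forall y, G1 z y -> y != v -> ~~ G2 w (f y)) ->
  (forall u, G1 v u -> u != z -> ~~ G2 (f z) (f u)) ->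
  (G1 v z -> ~~ G2 (f z) w) ->
  packs G1 G2 G3.
Proof.
move=> [[irr1 sym1] [irr2 sym2]] [fbij [fv [f3 f12]]] S1 S2 S3 S4 S5.
exists (fun a => f (tperm v z a)); split; [|split].
- apply: bij_comp => //; exists (tperm v z); exact: tpermK.
- move=> a; case: (tperm_cases v z a) => [[-> ->]|[[av [-> ->]]|[av [az ->]]]] //.
  + by rewrite fv.
  + exact: f3.
- move=> a b Gab.
  case: (tperm_cases v z a) => [[ea ta]|[[av [ea ta]]|[av [az ta]]]]; rewrite ta;
  case: (tperm_cases v z b) => [[eb tb]|[[bv [eb tb]]|[bv [bz tb]]]]; rewrite tb; (try rewrite ea in Gab); (try rewrite eb in Gab).
  + by rewrite irr1 in Gab.
  + by rewrite fv; apply: S5.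
  + by apply: S4.
  + by rewrite fv sym2; apply: S5; rewrite sym1.
  + by rewrite irr1 in Gab.
  + by rewrite fv; apply: S3.
  + by rewrite sym2; apply: S4 => //; rewrite sym1.
  + by rewrite fv sym2; apply: S3 => //; rewrite sym1.
  + exact: f12.
Qed.

Lemma sum_ge_term n (d : 'I_n -> nat) u : d u <= \sum_v d v.
Proof. by rewrite (bigD1 u) //= leq_addr. Qed.

Lemma wdeg_pos n (G : rel 'I_n) y u : G y u -> 0 < wdeg G y.
Proof. by move=> Gyu; apply/card_gt0P; exists u; rewrite inE. Qed.

Lemma two_d1_le n (G1 G3 : rel 'I_n) u : irreflexive G1 -> symmetric G1 ->
  2 * wdeg G1 u <= \sum_v (wdeg G1 v + d3_1 G3 v).
Proof.
move=> irr sym.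
apply: (@leq_trans (\sum_v (if v == u then wdeg G1 u else (G1 u v : nat)))).
  rewrite (bigD1 u) //= eqxx mul2n -addnn leq_add2l.
  rewrite /wdeg (card_sum (fun v => G1 u v)) (bigD1 u) //= irr add0n.
  by apply: eq_leq; apply: eq_bigr => i /negbTE ->.
apply: leq_sum => v _; case: eqP => [->|_]; first exact: leq_addr.
case Guv: (G1 u v) => //=; apply: leq_trans (leq_addr _ _); apply: (wdeg_pos (u := u)).
by rewrite sym.
Qed.

Lemma d32_le_sum n (G1 G3 : rel 'I_n) y : d3_2 G3 y <= \sum_v (wdeg G1 v + d3_1 G3 v).
Proof.
rewrite /d3_2 (card_sum (fun v => G3 v y)); apply: leq_sum => v _.
case Gv: (G3 v y) => //=; apply: leq_trans (leq_addl _ _).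
by apply/card_gt0P; exists y; rewrite inE.
Qed.

Lemma I_bound n (d : 'I_n -> nat) : n <= \sum_v d v + #|[set v | d v == 0]|.
Proof.
rewrite (card_sum (fun v => d v == 0)) -big_split /=.
rewrite -{1}(card_ord n) -sum1_card; apply: leq_sum => v _.
by case: (d v).
Qed.

Lemma leaf_bound n (d : 'I_n -> nat) : (forall v, d v != 1) ->
  2 * n <= \sum_v d v + 2 * #|[set v | d v == 0]|.
Proof.
move=> H; rewrite (card_sum (fun v => d v == 0)) big_distrr -big_split /=.
rewrite -{1}(card_ord n) -sum1_card big_distrr; apply: leq_sum => v _ /=.
by move: (H v); case: (d v) => // [[|k]].
Qed.

Lemma route1_bound n (d d1 : 'I_n -> nat) (P : pred 'I_n) : (forall y, d1 y <= d y) ->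
  \sum_(y | P y) d1 y + n <= \sum_y d y + #|[set y | P y]| + #|[set y | d y == 0]|.
Proof.
move=> H; rewrite (card_sum P) (card_sum (fun v => d v == 0)) -!big_split big_mkcond /=.
rewrite -[X in _ + X <= _](card_ord n) -sum1_card -big_split; apply: leq_sum => y _ /=.
have := H y; case: (P y) => /=; case: (d y) => [|k]; lia.
Qed.

Lemma min_bound n (d : 'I_n -> nat) k : (forall y, d y != 0 -> k <= d y) ->
  #|[set y | d y != 0]| * k <= \sum_y d y.
Proof.
move=> H; rewrite (card_sum (fun v => d v != 0)) big_distrl /=; apply: leq_sum => y _.
by case: eqP => [->|/eqP ne] //=; rewrite mul1n; apply: H.
Qed.

Lemma sum_wdeg_le n (G : rel 'I_n) : irreflexive G -> symmetric G ->
  \sum_x wdeg G x <= 2 * nedges G.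
Proof.
move=> irr sym.
have -> : \sum_x wdeg G x = #|[set p : 'I_n * 'I_n | G p.1 p.2]|.
  rewrite (card_sum (fun p : 'I_n * 'I_n => G p.1 p.2)) -(pair_bigA _ (fun x y => (G x y : nat))).
  by apply: eq_bigr => x _; rewrite /wdeg (card_sum (fun y => G x y)).
set E := [set p : 'I_n * 'I_n | (p.1 < p.2) && G p.1 p.2].
apply: (@leq_trans #|E :|: [set (p.2, p.1) | p in E]|).
  apply: subset_leq_card; apply/subsetP => [[a b]]; rewrite inE /= => Gab.
  case: (ltngtP a b) => hab.
  - by rewrite inE; apply/orP; left; rewrite inE /= hab Gab.
  - rewrite inE; apply/orP; right; apply/imsetP; exists (b, a) => //.
    by rewrite inE /= hab sym.
  - by move/val_inj: hab => e; subst; rewrite irr in Gab.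
rewrite /nedges -/E mul2n -addnn; apply: leq_trans (leq_card_setU _ _) _.
by rewrite leq_add2l leq_imset_card.
Qed.

Lemma sum_d32 n (G3 : rel 'I_n) : \sum_w d3_2 G3 w = \sum_v d3_1 G3 v.
Proof.
rewrite /d3_2 /d3_1.
under eq_bigr => w _ do rewrite (card_sum (fun v => G3 v w)).
under [in RHS]eq_bigr => v _ do rewrite (card_sum (fun w => G3 v w)).
by rewrite exchange_big.
Qed.

Lemma no_nbr n (G : rel 'I_n) v u : #|[set y | G v y]| = 0 -> ~~ G v u.
Proof. by move=> /eqP; rewrite cards_eq0 => /eqP/setP/(_ u); rewrite !inE => ->. Qed.

Lemma no_nbr2 n (G : rel 'I_n) w u : #|[set y | G y w]| = 0 -> ~~ G u w.
Proof. by move=> /eqP; rewrite cards_eq0 => /eqP/setP/(_ u); rewrite !inE => ->. Qed.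

Lemma edges2 n (G : rel 'I_n) x h : irreflexive G -> symmetric G -> x != h -> ~~ G x h ->
  wdeg G x + wdeg G h <= nedges G.
Proof.
move=> irr sym xh nG.
apply: leq_trans (leq_add (wdeg_edges x irr sym) (wdeg_edges h irr sym)) _.
apply: disj_le.
- by apply/subsetP => p; rewrite !inE => /andP[].
- by apply/subsetP => p; rewrite !inE => /andP[].
- move=> [a b]; rewrite !inE /= => /andP[/andP[_ Gab] ex]; apply/negP => /andP[_ eh].
  case/orP: ex => /eqP ea; case/orP: eh => /eqP eb; subst.
  + by rewrite eqxx in xh.
  + by rewrite Gab in nG.
  + by rewrite sym Gab in nG.
  + by rewrite eqxx in xh.
Qed.

Definition swap_ok n (G1 G2 G3 : rel 'I_n) v w (f : 'I_n -> 'I_n) z :=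
  [/\ ~~ G3 z w, ~~ G3 v (f z),
      (forall y, G1 z y -> y != v -> ~~ G2 w (f y)),
      (forall u, G1 v u -> u != z -> ~~ G2 (f z) (f u)) &
      (G1 v z -> ~~ G2 (f z) w)].

Lemma finish n (G1 G2 G3 : rel 'I_n) v w :
  minimal_counterexample G1 G2 G3 ->
  (forall u, wdeg G1 u + 3 <= n) ->
  (forall x, x != w -> wdeg G2 x + 3 <= n + G2 x w) ->
  (forall u, d3_1 G3 u + 2 <= n) -> (forall y, d3_2 G3 y + 2 <= n) ->
  ~~ G3 v w -> 3 <= wdeg G1 v + d3_1 G3 v + (wdeg G2 w + d3_2 G3 w) ->
  (forall f, ppack G1 G2 G3 v w f -> exists z, swap_ok G1 G2 G3 v w f z) -> False.
Proof.
case: n G1 G2 G3 v w => [|n] G1 G2 G3 v w; first by case: v.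
move=> [[gt [_ [_ [_ HF]]]] [npk min]] R1 R2 R31 R32 nvw drop Hz.
have [f fp] := reduce gt min HF R1 R2 R31 R32 nvw drop.
have [z [S1 S2 S3 S4 S5]] := Hz f fp.
by apply: npk; apply: (swap_packs gt fp S1 S2 S3 S4 S5).
Qed.

Lemma noswap n (G1 G2 G3 : rel 'I_n) v w f :
  wdeg G1 v = 0 -> ~~ G3 v w -> ppack G1 G2 G3 v w f -> swap_ok G1 G2 G3 v w f v.
Proof.
move=> d0 nvw [_ [fv _]]; split; rewrite ?fv //.
- by move=> y; rewrite (negbTE (no_nbr _ d0)).
- by move=> y; rewrite (negbTE (no_nbr _ d0)).
- by rewrite (negbTE (no_nbr _ d0)).
Qed.

Lemma exists_notin n (B : {set 'I_n}) : #|B| < n -> exists z, z \notin B.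
Proof.
move=> H; apply/existsP; rewrite -negb_forall; apply/negP => /forallP Hall.
have : B = setT by apply/setP => x; rewrite inE; move: (Hall x); case: (x \in B).
by move=> e; rewrite e cardsT card_ord ltnn in H.
Qed.

Lemma exists_in_notin (T : finType) (A B : {set T}) : #|B| < #|A| -> exists z, z \in A /\ z \notin B.
Proof.
move=> H; case: (boolP (A \subset B)) => [/subset_leq_card|/subsetPn [z za zb]].
- by rewrite leqNgt H.
- by exists z.
Qed.

Lemma exists_non_nbr n (G : rel 'I_n) v : #|[set w | G v w]| < n -> exists w, ~~ G v w.
Proof. by move=> /exists_notin [w]; rewrite inE => ?; exists w. Qed.

Lemma card_pre n (f : 'I_n -> 'I_n) (P : pred 'I_n) : bijective f ->
  #|[set z | P (f z)]| = #|[set x | P x]|.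
Proof.
move=> /bij_inj finj; by rewrite -[RHS](card_preimset _ finj); apply: eq_card => z; rewrite !inE.
Qed.

Lemma route2_arith n m i d1 d3 S D :
  m * (d1 + d3) <= S -> S + D + 13 <= 2 * n -> d1 + 1 <= m -> d3 + 5 <= n ->
  7 <= i -> i + m = n -> 100 <= n -> d3 + 2 * d1 < i.
Proof.
move=> h1 h2 h3 h4 h5 h6 h7; rewrite ltnNge; apply/negP => h.
have hd : m * (d1 + d3) <= 2 * n by lia.
case: m h1 h3 h6 hd => [|[|[|[|[|m]]]]] h1 h3 h6 hd; try lia.
have : 0 <= m * (i - 7) by [].
nia.
Qed.

Theorem mainTheorem7 (n : nat) (G1 G2 G3 : rel 'I_n) :
  minimal_counterexample G1 G2 G3 ->
  (forall w : 'I_n, 2 <= wdeg G2 w + d3_2 G3 w) ->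
  2 * n <= calD G1 G2 G3 + (\sum_(v < n) (wdeg G1 v + d3_1 G3 v)) + 12.
Proof.
move=> MC HW.
have MC' := MC.
move: MC' => [[[[irr1 sym1] [irr2 sym2]] [HD1 [HD2 [HD3 HF]]]] [npk min]].
rewrite leqNgt; apply/negP => NEG.
set S := \sum_(v < n) _ in NEG.
set D := calD G1 G2 G3 in NEG.
have eC : 400 <= constC.
  rewrite /constC; apply: (leq_trans _ (leq_addr _ _)).
  by apply: (leq_trans _ (leq_pmull _ _)); rewrite ?expn_gt0.
have Hn : 100 <= n by move: HF eC; lia.
have FD1 : forall u, wdeg G1 u <= D.
  move=> u; have := le_maxdeg (wdeg G1) u; rewrite /D /calD /Delta1; lia.
have FD2 : forall x, wdeg G2 x <= D.
  move=> u; have := le_maxdeg (wdeg G2) u; rewrite /D /calD /Delta2; lia.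
have FD31 : forall u, d3_1 G3 u <= D + 4.
  move=> u; have := le_maxdeg (d3_1 G3) u; rewrite /D /calD /Delta31; lia.
have FD32 : forall u, d3_2 G3 u <= D + 4.
  move=> u; have := le_maxdeg (d3_2 G3) u; rewrite /D /calD /Delta32; lia.
have FS : forall u, wdeg G1 u + d3_1 G3 u <= S.
  by move=> u; exact: (sum_ge_term (fun v => wdeg G1 v + d3_1 G3 v) u).
have FS2 : forall u, 2 * wdeg G1 u <= S by move=> u; exact: two_d1_le.
have FS32 : forall y, d3_2 G3 y <= S by move=> y; exact: d32_le_sum.
have R1 : forall u, wdeg G1 u + 3 <= n by move=> u; have := FS2 u; have := FD1 u; lia.
have R31 : forall u, d3_1 G3 u + 5 <= n by move=> u; have := FS u; have := FD31 u; lia.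
have R32 : forall u, d3_2 G3 u + 5 <= n by move=> u; have := FS32 u; have := FD32 u; lia.
have R31' : forall u, d3_1 G3 u + 2 <= n by move=> u; have := R31 u; lia.
have R32' : forall u, d3_2 G3 u + 2 <= n by move=> u; have := R32 u; lia.
set I := [set v | wdeg G1 v + d3_1 G3 v == 0].
have HI : n <= S + #|I| by exact: (I_bound (fun v => wdeg G1 v + d3_1 G3 v)).
case: (boolP [exists h, n < wdeg G2 h + 3]) => [/existsP [h Hh] | /existsP noA].
  have [v vI] : exists v, v \in I.
    apply/card_gt0P; have := FD2 h; lia.
  move: vI; rewrite inE => /eqP v0.
  have d10 : wdeg G1 v = 0 by lia.
  have d30 : d3_1 G3 v = 0 by lia.
  have nvh : ~~ G3 v h by exact: no_nbr.
  apply: (finish (v := v) (w := h) MC R1 _ R31' R32' nvh).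
  - move=> x xh; case Gxh: (G2 x h); first by have := HD2; have := le_maxdeg (wdeg G2) x; rewrite /Delta2 /=; lia.
    rewrite /nat_of_bool addn0 leqNgt; apply/negP => Hx.
    have E2 := edges2 irr2 sym2 xh (negbT Gxh).
    have := FD2 h; move: HF eC; rewrite /Fval -/D; lia.
  - lia.
  - by move=> f fp; exists v; exact: noswap.
have R2 : forall x, wdeg G2 x + 3 <= n.
  by move=> x; rewrite leqNgt; apply/negP => H; apply: noA; exists x.
have R2' : forall w x, x != w -> wdeg G2 x + 3 <= n + G2 x w.
  by move=> w x _; apply: leq_trans (R2 x) (leq_addr _ _).
case: (boolP [exists v, (wdeg G1 v == 0) && (0 < d3_1 G3 v)]) => [/existsP [v /andP[/eqP d0 d3p]] | /existsP noB1].
  have [w nvw] : exists w, ~~ G3 v w by apply: exists_non_nbr; have := R31 v; rewrite /d3_1; lia.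
  apply: (finish (v := v) (w := w) MC R1 (R2' w) R31' R32' nvw).
  - by have := HW w; lia.
  - by move=> f fp; exists v; exact: noswap.
case: (boolP ([exists v, v \in I] && [exists w, 2 < wdeg G2 w + d3_2 G3 w])) => [/andP[/existsP [v vI] /existsP [w Hw]] | noB2].
  move: vI; rewrite inE => /eqP v0.
  have d10 : wdeg G1 v = 0 by lia.
  have d30 : d3_1 G3 v = 0 by lia.
  have nvw : ~~ G3 v w by exact: no_nbr.
  apply: (finish (v := v) (w := w) MC R1 (R2' w) R31' R32' nvw).
  - lia.
  - by move=> f fp; exists v; exact: noswap.
have smallW : 0 < #|I| -> forall w, wdeg G2 w + d3_2 G3 w <= 2.
  move=> /card_gt0P [v vI] w; rewrite leqNgt; apply/negP => Hw; move: noB2.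
  by rewrite negb_and => /orP[] /existsP; apply; [exists v | exists w].
case: (leqP #|I| 6) => HI6.
  have [v /eqP v1] : exists v, wdeg G1 v + d3_1 G3 v == 1.
    case: (boolP [exists v, wdeg G1 v + d3_1 G3 v == 1]) => [/existsP[x hx] | /existsP nex]; first by exists x.
    have Hall : forall x, wdeg G1 x + d3_1 G3 x != 1 by move=> x; apply/negP => e; apply: nex; exists x.
    have LB : 2 * n <= S + 2 * #|I| := leaf_bound Hall.
    lia.
  have d11 : wdeg G1 v = 1.
    have : ~~ ((wdeg G1 v == 0) && (0 < d3_1 G3 v)) by apply/negP => h; apply: noB1; exists v.
    case: (posnP (wdeg G1 v)) => [e|pos]; last by lia.
    move/negP => h; exfalso; apply: h; apply/andP; split; first by apply/eqP.
    lia.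
  have d30 : d3_1 G3 v = 0 by lia.
  have /cards1P [u Eu] : #|[set y | G1 v y]| == 1 by apply/eqP.
  have [w Hw] : exists w, wdeg G2 w + d3_2 G3 w + #|I| <= 10.
    case: (posnP #|I|) => [I0 | Ipos]; last by exists v; have := smallW Ipos v; lia.
    case: (boolP [exists x, wdeg G2 x + d3_2 G3 x + #|I| <= 10]) => [/existsP[x hx] | /existsP nex]; first by exists x.
    have Hall : forall x, ~~ (wdeg G2 x + d3_2 G3 x + #|I| <= 10) by move=> x; apply/negP => e; apply: nex; exists x.
    have H9 : 9 * n <= \sum_(w < n) (wdeg G2 w + d3_2 G3 w).
      apply: (@leq_trans (\sum_(w < n) 9)); first by rewrite sum_nat_const card_ord mulnC.
      by apply: leq_sum => x _; have := Hall x; lia.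
    rewrite big_split /= (sum_d32 G3) in H9.
    have H1 := sum_wdeg_le irr2 sym2.
    have H2 : \sum_(x < n) d3_1 G3 x <= S by apply: leq_sum => x _; exact: leq_addl.
    have H10 : 9 * n <= 2 * nedges G2 + S by apply: (leq_trans H9); exact: leq_add H1 H2.
    exfalso; move: HF; rewrite /Fval; lia.
  have nvw : ~~ G3 v w by exact: no_nbr.
  apply: (finish (v := v) (w := w) MC R1 (R2' w) R31' R32' nvw).
  - by have := HW w; lia.
  move=> f fp; have [fbij _] := fp.
  set B := [set z | G3 z w] :|: [set z | [exists y, G2 w (f y) && G1 y z]] :|: [set u]
           :|: [set z | G2 (f u) (f z)].
  have cB : #|B| < n.
    have c1 := card_exists_le (fun y => G2 w (f y)) (fun y z => G1 y z).
    have c2 : \sum_(y | G2 w (f y)) wdeg G1 y + n <= S + #|[set y | G2 w (f y)]| + #|I|.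
      by apply: (route1_bound (d := fun v => wdeg G1 v + d3_1 G3 v) (d1 := wdeg G1)) => y; exact: leq_addr.
    have c3 : #|[set y | G2 w (f y)]| = wdeg G2 w := card_pre (fun x => G2 w x) fbij.
    have c4 : #|[set z | G2 (f u) (f z)]| = wdeg G2 (f u) := card_pre (fun x => G2 (f u) x) fbij.
    have c5 := FD2 (f u).
    have c6 := cards1 u.
    have c1' : #|[set z | [exists y, G2 w (f y) && G1 y z]]| <= \sum_(y | G2 w (f y)) wdeg G1 y := c1.
    have cBB : #|B| <= #|[set z | G3 z w]| + #|[set z | [exists y, G2 w (f y) && G1 y z]]| + #|[set u]| + #|[set z | G2 (f u) (f z)]|.
      rewrite /B; apply: (leq_trans (leq_card_setU _ _)); rewrite leq_add2r.
      apply: (leq_trans (leq_card_setU _ _)); rewrite leq_add2r; exact: leq_card_setU.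
    have c0 : #|[set z | G3 z w]| = d3_2 G3 w by [].
    lia.
  have [z zB] := exists_notin cB.
  exists z; move: zB; rewrite !inE !negb_or => /andP[/andP[/andP[nz3 nz2] nzu] nzf].
  split.
  - exact: nz3.
  - exact: no_nbr.
  - move=> y Gzy yv; apply/negP => Gw; move/negP: nz2; apply; apply/existsP; exists y.
    by rewrite Gw sym1.
  - move=> u' Gvu' _; have : u' \in [set y | G1 v y] by rewrite inE.
    by rewrite Eu inE => /eqP ->; rewrite sym2.
  - move=> Gvz; have : z \in [set y | G1 v y] by rewrite inE.
    by rewrite Eu inE => zu; rewrite zu in nzu.
have Ipos : 0 < #|I| by lia.
have W2 : forall x, wdeg G2 x <= 2 by move=> x; have := smallW Ipos x; lia.
case: (boolP [exists v, v \notin I]) => [/existsP [v0 v0I] | /existsP allI].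
  case: (@arg_minnP _ v0 (fun x => x \notin I) (fun x => wdeg G1 x + d3_1 G3 x) v0I) => v vI Hmin.
  have cI := cardsC I.
  have eNI : #|~: I| = #|[set y | wdeg G1 y + d3_1 G3 y != 0]|.
    by apply: eq_card => y; rewrite !inE.
  have MB : #|~: I| * (wdeg G1 v + d3_1 G3 v) <= S.
    rewrite eNI; apply: (min_bound (d := fun v => wdeg G1 v + d3_1 G3 v)) => y /= hy.
    by apply: Hmin; rewrite inE.
  have DV : wdeg G1 v + 1 <= #|~: I|.
    rewrite -(cards1 v); apply: disj_le.
    - apply/subsetP => y; rewrite !inE => Gvy; have := wdeg_pos (G := G1) (y := y) (u := v).
      by rewrite sym1 Gvy => /(_ isT); lia.
    - by apply/subsetP => y; rewrite !inE => /eqP ->; move: vI; rewrite inE.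
    - by move=> y; rewrite !inE => Gvy; apply/eqP => e; rewrite e irr1 in Gvy.
  have AR : d3_1 G3 v + 2 * wdeg G1 v < #|I|.
    rewrite card_ord in cI.
    apply: (route2_arith (D := D) MB _ DV (R31 v) _ cI Hn); lia.
  have [w nvw] : exists w, ~~ G3 v w by apply: exists_non_nbr; have := R31 v; rewrite /d3_1; lia.
  apply: (finish (v := v) (w := w) MC R1 (R2' w) R31' R32' nvw).
  - by have := HW w; move: vI; rewrite inE; lia.
  move=> f fp; have [fbij _] := fp.
  set B := [set z | G3 v (f z)] :|: [set z | [exists u, G1 v u && G2 (f u) (f z)]].
  have cB : #|B| < #|I|.
    have c1 := card_exists_le (fun u => G1 v u) (fun u z => G2 (f u) (f z)).
    have c2 : \sum_(u | G1 v u) #|[set z | G2 (f u) (f z)]| <= \sum_(u | G1 v u) 2.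
      by apply: leq_sum => u _; rewrite (card_pre (fun x => G2 (f u) x) fbij); exact: W2.
    rewrite sum_nat_cond_const in c2.
    have c3 : #|[set z | G3 v (f z)]| = d3_1 G3 v := card_pre (fun x => G3 v x) fbij.
    have c1' : #|[set z | [exists u, G1 v u && G2 (f u) (f z)]]| <= #|[set x | G1 v x]| * 2 := leq_trans c1 c2.
    have cBB : #|B| <= #|[set z | G3 v (f z)]| + #|[set z | [exists u, G1 v u && G2 (f u) (f z)]]| := leq_card_setU _ _.
    have c0 : #|[set x | G1 v x]| = wdeg G1 v by [].
    lia.
  have [z [zI zB]] := exists_in_notin cB.
  move: zI; rewrite inE => /eqP z0.
  have zd1 : wdeg G1 z = 0 by lia.
  have zd3 : d3_1 G3 z = 0 by lia.
  exists z; move: zB; rewrite !inE negb_or => /andP[nz3 nz2].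
  split.
  - exact: no_nbr.
  - exact: nz3.
  - by move=> y; rewrite (negbTE (no_nbr _ zd1)).
  - move=> u' Gvu' _; apply/negP => Gf; move/negP: nz2; apply; apply/existsP; exists u'.
    by rewrite Gvu' sym2.
  - by rewrite sym1 (negbTE (no_nbr _ zd1)).
have aI : forall v, v \in I by move=> v; apply/negPn/negP => H; apply: allI; exists v.
apply: npk; exists id; split; [exists id => // | split].
- move=> v; have := aI v; rewrite inE => /eqP h0.
  have h3 : d3_1 G3 v = 0 by lia.
  exact: no_nbr.
- move=> a b; have := aI a; rewrite inE => /eqP h0.
  have h1 : wdeg G1 a = 0 by lia.
  by rewrite (negbTE (no_nbr b h1)).
Qed.
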